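(* Let $(X,d)$ be a finite metric space and $k$ a positive integer. For a nonempty $S\subseteq X$ and $t\in[k]$, let $(\mathcal{C}_1,\dots,\mathcal{C}_t)$ be the output of $\mathtt{recMSD}(S,t)$, and let $\operatorname{opt}_i(S)$ denote the cost of an optimal $i$-clustering of $S$. Then for every $\varepsilon\in[0,1)$ and every $r\in\{1,\dots,t\}$, $$\Pr\left[\operatorname{cost}(\mathcal{C}_r)\le \frac{\operatorname{opt}_r(S)}{1-\varepsilon}\right]\ge \varepsilon^{r-1}.$$
   Context: An $i$-clustering of a set $S$ is a collection of at most $i$ subsets whose union is $S$; its cost is $\operatorname{cost}(\mathcal{C})=\sum_{C\in\mathcal{C}}\operatorname{diam}(C)$ with $\operatorname{diam}(C)=\max_{p,q\in C}d(p,q)$. $\operatorname{Ball}(x,R)=\{z\in X: d(x,z)\le R\}$. The randomized procedure $\mathtt{recMSD}(S,t)$ (for nonempty $S\subseteq X$, $t\in[k]$) is: set $\mathcal{C}_i\gets\{S\}$ for all $i\in\{1,\dots,t\}$; if $t=1$ or $|S|=1$, return $(\mathcal{C}_1,\dots,\mathcal{C}_t)$. Otherwise let $x,y\in S$ with $d(x,y)=\operatorname{diam}(S)$, choose $R\in[0,\operatorname{diam}(S)]$ uniformly at random, let $S_1=S\cap\operatorname{Ball}(x,R)$ and $S_2=S\setminus\operatorname{Ball}(x,R)$, compute (with independent randomness) $\mathcal{A}=\mathtt{recMSD}(S_1,t-1)$ and $\mathcal{B}=\mathtt{recMSD}(S_2,t-1)$; then for all $i,j\in\{1,\dots,t-1\}$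 with $i+j\le t$, if $\operatorname{cost}(\mathcal{A}_i\cup\mathcal{B}_j)<\operatorname{cost}(\mathcal{C}_{i+j})$ set $\mathcal{C}_{i+j}\gets\mathcal{A}_i\cup\mathcal{B}_j$. Return $(\mathcal{C}_1,\dots,\mathcal{C}_t)$. *)

(* Defs.v *)
From HB Require Import structures.
From mathcomp Require Import all_boot all_order all_algebra.
From mathcomp Require Import all_classical all_reals all_analysis.
Set Implicit Arguments. Unset Strict Implicit. Unset Printing Implicit Defensive.
Import Order.TTheory GRing.Theory Num.Theory.
Import numFieldNormedType.Exports.
Local Open Scope ring_scope.

Section MSD.
Variables (R : realType) (T : finType) (d : T -> T -> R).

Definition is_metric : Prop :=
  [/\ forall x y, 0 <= d x y,
      forall x y, d x y = 0 <-> x = y,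
      forall x y, d x y = d y x &
      forall x y z, d x z <= d x y + d y z].

Definition diam (C : {set T}) : R :=
  \big[Num.max/0]_(p in C) \big[Num.max/0]_(q in C) d p q.

Definition cost (C : {set {set T}}) : R := \sum_(A in C) diam A.

Definition is_clustering (i : nat) (S : {set T}) (C : {set {set T}}) : Prop :=
  (#|C| <= i)%N /\ \bigcup_(A in C) A = S.

(* pick S : the point x of the algorithm, i.e. some x in S such that
   d(x,y) = diam(S) for some y in S.  The theorem quantifies over all
   such selection rules. *)
Definition diam_selector (pick : {set T} -> T) : Prop :=
  forall S : {set T}, (0 < #|S|)%N ->
    pick S \in S /\ exists2 y, y \in S & d (pick S) y = diam S.

Variables (k : nat) (pick : {set T} -> T).

(* An output (C_1,...,C_t) of recMSD is stored as a finite function on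
   'I_k.+1, entry i holding C_i (entries 0 and > t are irrelevant). *)
Definition out := {ffun 'I_k.+1 -> {set {set T}}}.

Definition init_out (S : {set T}) : out := [ffun _ => [set S]].

Definition combine_step (t : nat) (a b : out) (c : out) (ij : nat * nat) : out :=
  let i := ij.1 in let j := ij.2 in
  if ((i + j <= t)%N && (i + j <= k)%N) &&
     (cost (a (inord i) :|: b (inord j)) < cost (c (inord (i + j))))
  then [ffun l => if l == inord (i + j) then a (inord i) :|: b (inord j)
                  else c l]
  else c.

Definition combine (t : nat) (S : {set T}) (a b : out) : out :=
  foldl (combine_step t a b) (init_out S)
        [seq (i, j) | i <- iota 1 t.-1, j <- iota 1 t.-1].

Definition ball_part (S : {set T}) (x : T) (r : R) : {set T} :=
  [set z in S | d x z <= r].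

(* recMSD_dist t S o = probability that recMSD(S,t) outputs o.
   R is uniform on [0, diam S] (density 1/diam S w.r.t. Lebesgue measure),
   and the two recursive calls use independent randomness (product of
   the two output distributions). *)
Fixpoint recMSD_dist (t : nat) (S : {set T}) : out -> R :=
  match t with
  | 0 => fun o => (o == init_out S)%:R
  | t'.+1 =>
    if (t' == 0)%N || (#|S| <= 1)%N then fun o => (o == init_out S)%:R
    else fun o =>
      let D := diam S in
      let x := pick S in
      D^-1 * Rintegral (@lebesgue_measure R) `[0, D]%classic
        (fun r =>
           \sum_(a : out) \sum_(b : out)
             recMSD_dist t' (ball_part S x r) a *
             recMSD_dist t' (S :\: ball_part S x r) b *
             (o == combine t'.+1 S a b)%:R)
  end.

Definition recMSD_prob (t : nat) (S : {set T}) (P : pred out) : R :=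
  \sum_(o : out | P o) recMSD_dist t S o.

End MSD.

(* Main.v *)
Require Import Defs.
From HB Require Import structures.
From mathcomp Require Import all_boot all_order all_algebra.
From mathcomp Require Import all_classical all_reals all_analysis.
From mathcomp Require Import zify lra.
Import Order.TTheory GRing.Theory Num.Theory.
Import numFieldNormedType.Exports.
Local Open Scope ring_scope.
Set Implicit Arguments. Unset Strict Implicit. Unset Printing Implicit Defensive.


Section Basic.
Variables (R : realType) (T : finType) (d : T -> T -> R).

Lemma diam_ge0 (C : {set T}) : 0 <= diam d C.
Proof. exact: bigmax_ge_id. Qed.

Lemma diam_ub (C : {set T}) p q : p \in C -> q \in C -> d p q <= diam d C.
Proof.
move=> pC qC; rewrite /diam.
apply: le_trans (le_bigmax_cond _ _ pC).
exact: (le_bigmax_cond _ _ qC).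
Qed.

Lemma diam_le (C : {set T}) c : 0 <= c -> (forall p q, p \in C -> q \in C -> d p q <= c) ->
  diam d C <= c.
Proof.
move=> c0 H; apply: bigmax_le => // p pC; apply: bigmax_le => // q qC.
exact: H.
Qed.

Lemma cost_ge0 C : 0 <= cost d C.
Proof. by apply: sumr_ge0 => A _; apply: diam_ge0. Qed.

Lemma cost_setU A B : cost d (A :|: B) <= cost d A + cost d B.
Proof.
rewrite /cost !(big_mkcond (fun i => i \in _)) -big_split /=.
apply: ler_sum => i _; rewrite !inE.
case: (i \in A); case: (i \in B) => /=; rewrite ?addr0 ?add0r ?lerDl ?diam_ge0 //.
Qed.

Lemma cost_split (C P : {set {set T}}) :
  cost d C = cost d (C :&: P) + cost d (C :\: P).
Proof. by rewrite /cost (big_setID P). Qed.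

Lemma cost_set1 A : cost d [set A] = diam d A.
Proof. by rewrite /cost big_set1. Qed.

End Basic.


Section Comb.
Variables (R : realType) (T : finType) (d : T -> T -> R) (k : nat).

Lemma step_mono t (a b c : out T k) ij l :
  cost d ((combine_step d t a b c ij) l) <= cost d (c l).
Proof.
rewrite /combine_step; case: ifP => // /andP[_ H]; rewrite ffunE.
by case: eqP => [->|_]; [apply: ltW|].
Qed.

Lemma step_cand t (a b c : out T k) i j :
  (i + j <= t)%N -> (i + j <= k)%N ->
  cost d ((combine_step d t a b c (i, j)) (inord (i + j))) <=
  cost d (a (inord i) :|: b (inord j)).
Proof.
move=> h1 h2; rewrite /combine_step /= h1 h2 /=.
case: ifP => [_|/negbT]; first by rewrite ffunE eqxx.
by rewrite -leNgt.
Qed.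

Lemma foldl_mono t (a b : out T k) s c l :
  cost d ((foldl (combine_step d t a b) c s) l) <= cost d (c l).
Proof.
elim: s c => [|x s IH] c //=.
exact: le_trans (IH _) (step_mono _ _ _ _ _ _).
Qed.

Lemma foldl_cand t (a b : out T k) s c i j :
  (i, j) \in s -> (i + j <= t)%N -> (i + j <= k)%N ->
  cost d ((foldl (combine_step d t a b) c s) (inord (i + j))) <=
  cost d (a (inord i) :|: b (inord j)).
Proof.
move=> + h1 h2; elim: s c => [|x s IH] c //=.
rewrite inE => /orP[/eqP <-|/IH //].
exact: le_trans (foldl_mono _ _ _ _ _ _) (step_cand _ _ _ h1 h2).
Qed.

Lemma combine_le_init t S (a b : out T k) l :
  cost d ((combine d t S a b) l) <= diam d S.
Proof.
rewrite /combine; apply: le_trans (foldl_mono _ _ _ _ _ _) _.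
by rewrite /init_out ffunE cost_set1.
Qed.

Lemma combine_le_cand t S (a b : out T k) i j :
  (1 <= i <= t.-1)%N -> (1 <= j <= t.-1)%N -> (i + j <= t)%N -> (i + j <= k)%N ->
  cost d ((combine d t S a b) (inord (i + j))) <=
  cost d (a (inord i) :|: b (inord j)).
Proof.
move=> hi hj h1 h2; apply: foldl_cand => //.
apply/allpairsP; exists (i, j) => /=; split => //; rewrite mem_iota; lia.
Qed.
End Comb.


Section Meas.
Variables (R : realType) (T : finType) (d : T -> T -> R) (S : {set T}) (x : T).

Lemma ballbE U (r : R) : (ball_part d S x r == U) =
  (U \subset S) && all (fun z => (z \in S) ==> ((d x z <= r) == (z \in U))) (index_enum T).
Proof.
apply/eqP/andP => [<-|[US /allP H]].
  split; first by apply/fintype.subsetP => z; rewrite inE => /andP[].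
  by apply/allP => z _; apply/implyP => zS; rewrite inE zS.
apply/setP => z; rewrite inE; case zS: (z \in S) => /=.
  by have /implyP/(_ zS)/eqP := H z (mem_index_enum z).
by apply/esym/negbTE; exact: (contraFN (fintype.subsetP US z) zS).
Qed.

Lemma measurable_ballb U : measurable_fun setT (fun r : R => ball_part d S x r == U).
Proof.
rewrite (_ : (fun r => _) = (fun r : R => (U \subset S) &&
   all (fun z => (z \in S) ==> ((d x z <= r) == (z \in U))) (index_enum T))); last first.
  by apply/funext => r; rewrite ballbE.
apply: measurable_and; first exact: measurable_cst.
elim: (index_enum T) => [|z s IH] /=; first exact: measurable_cst.
apply: measurable_and => //.
case: (z \in S) => /=; last exact: measurable_cst.
case: (z \in U).
  under eq_fun do rewrite eqb_id.
  by apply: measurable_realfun.measurable_fun_ler => //; exact: measurable_cst.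
under eq_fun do rewrite eqbF_neg.
by apply: measurable_neg; apply: measurable_realfun.measurable_fun_ler => //; exact: measurable_cst.
Qed.

Lemma measurable_ballf (G : {set T} -> R) :
  measurable_fun setT (fun r : R => G (ball_part d S x r)).
Proof.
rewrite (_ : (fun r => _) = (fun r : R => \sum_(U : {set T})
   (if ball_part d S x r == U then G U else 0))); last first.
  apply/funext => r; rewrite (bigD1 (ball_part d S x r)) //= eqxx big1 ?addr0 //.
  by move=> U /negbTE; rewrite eq_sym => ->.
apply: measurable_sum => U; apply: measurable_fun_ifT.
- exact: measurable_ballb.
- exact: measurable_cst.
- exact: measurable_cst.
Qed.

End Meas.


Section Int.
Variables (R : realType).
Notation mu := (@lebesgue_measure R).

Lemma int_bdd (D : R) (f : R -> R) M : measurable_fun setT f ->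
  (forall r, `|f r| <= M) -> mu.-integrable `[0, D]%classic (EFin \o f).
Proof.
move=> mf fM; apply: measurable_bounded_integrable.
- exact: measurable_itv.
- apply: (@eq_ind_r _ _ (fun v => (v < +oo)%E) _ _ (@lebesgue_measure_itv R `[0, D])). by case: ifP => _; rewrite ?ltry.
- exact: measurable_funS mf.
- rewrite /bounded_near; near=> M0 => t _ /=.
  apply: le_trans (fM t) _; near: M0; apply: nbhs_pinfty_ge; exact: num_real.
Unshelve. all: end_near. Qed.

Lemma mu_itv (D : R) : 0 <= D -> fine (mu `[0, D]%classic) = D.
Proof.
move=> D0; rewrite lebesgue_measure_itv /= lte_fin.
case: ifP => [_|]; first by rewrite /= oppr0 addr0.
by rewrite lt_neqAle D0 andbT => /negbFE/eqP <-.
Qed.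

Variables (T : finType) (d : T -> T -> R) (S : {set T}) (x : T).

Lemma int_ballf D (G : {set T} -> R) :
  mu.-integrable `[0, D]%classic (EFin \o (fun r => G (ball_part d S x r))).
Proof.
apply: (@int_bdd _ _ (\sum_U `|G U|)); first exact: measurable_ballf.
move=> r; rewrite (bigD1 (ball_part d S x r)) //= lerDl.
by apply: sumr_ge0 => *.
Qed.

Lemma Rint_sum D (I : Type) (s : seq I) (P : pred I) (G : I -> {set T} -> R) :
  \sum_(i <- s | P i) Rintegral mu `[0, D]%classic (fun r => G i (ball_part d S x r)) =
  Rintegral mu `[0, D]%classic (fun r => \sum_(i <- s | P i) G i (ball_part d S x r)).
Proof.
elim: s => [|i s IH].
  rewrite big_nil; under eq_Rintegral do rewrite big_nil.
  by rewrite Rintegral_cst ?mul0r //; exact: measurable_itv.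
rewrite big_cons; under [in RHS]eq_Rintegral do rewrite big_cons.
case: (P i); last exact: IH.
rewrite RintegralD ?IH //.
- exact: int_ballf.
- exact: (int_ballf D (fun U => \sum_(i <- s | P i) G i U)).
Qed.

End Int.

Section Int2.
Variables (R : realType).
Notation mu := (@lebesgue_measure R).

Lemma Rint_sum_gen D (I : Type) (s : seq I) (F : I -> R -> R) :
  (forall i, mu.-integrable `[0, D]%classic (EFin \o F i)) ->
  mu.-integrable `[0, D]%classic (EFin \o (fun r => \sum_(i <- s) F i r)) /\
  \sum_(i <- s) Rintegral mu `[0, D]%classic (F i) =
  Rintegral mu `[0, D]%classic (fun r => \sum_(i <- s) F i r).
Proof.
move=> Fi; elim: s => [|i s [IHi IH]].
  rewrite big_nil; split.
    apply: (@int_bdd _ _ _ 0).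
      by rewrite (_ : (fun r => _) = cst 0); [exact: measurable_cst|apply/funext => r; rewrite big_nil].
    by move=> r /=; rewrite big_nil normr0.
  by under eq_Rintegral do rewrite big_nil; rewrite Rintegral_cst ?mul0r //; exact: measurable_itv.
split.
  rewrite (_ : (EFin \o _) = (EFin \o F i) \+ (EFin \o (fun r => \sum_(i <- s) F i r))).
    by apply: integrableD => //; exact: measurable_itv.
  by apply/funext => r /=; rewrite big_cons EFinD.
rewrite big_cons; under [in RHS]eq_Rintegral do rewrite big_cons.
by rewrite RintegralD ?IH //; exact: measurable_itv.
Qed.

Lemma int_indic D (A : set R) : measurable A ->
  mu.-integrable `[0, D]%classic (EFin \o (\1_A : R -> R)).
Proof.
move=> mA; apply: (@int_bdd _ _ _ 1); first exact: measurable_realfun.measurable_indic.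
move=> r; rewrite indicE; case: (r \in A); by rewrite ?normr1 ?normr0.
Qed.

Lemma Rint_indic_le D m M c : M - m <= c -> 0 <= c ->
  Rintegral mu `[0, D]%classic (\1_(`[m, M]%classic) : R -> R) <= c.
Proof.
move=> Mm c0; rewrite /Rintegral.
pose A : set R := setI (`[m, M]%classic) (`[0, D]%classic).
pose I : set R := `[m, M]%classic. pose J : set R := `[0, D]%classic.
have -> : (\int[mu]_(x in J) (\1_I x)%:E = mu A)%E.
  by rewrite integral_indic //; apply: measurable_itv.
have h1 : (mu A <= c%:E)%E.
  apply: (le_trans (@le_measure _ _ _ mu A (`[m, M]%classic) _ _ _)).
  - by apply/mem_set; apply: measurableI; exact: measurable_itv.
  - by apply/mem_set; exact: measurable_itv.
  - exact: subIsetl.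
  apply: (@eq_ind_r _ _ (fun v => (v <= c%:E)%E) _ _ (@lebesgue_measure_itv R `[m, M])).
  by case: ifP => _; rewrite ?lee_fin // -EFinB lee_fin.
have h0 : (0 <= mu A)%E by apply: measure_ge0.
rewrite -lee_fin fineK //; rewrite ge0_fin_numE //.
exact: le_lt_trans h1 (ltry _).
Qed.

End Int2.


Section Rec.
Variables (R : realType) (T : finType) (d : T -> T -> R) (k : nat) (pick : {set T} -> T).
Notation mu := (@lebesgue_measure R).
Notation dist := (@recMSD_dist R T d k pick).

Lemma dist0 (S : {set T}) : dist 0 S = fun o => (o == init_out k S)%:R.
Proof. by []. Qed.

Lemma dist_small t (S : {set T}) : (t == 0)%N || (#|S| <= 1)%N ->
  dist t.+1 S = fun o => (o == init_out k S)%:R.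
Proof. by move=> /= ->. Qed.

Lemma dist_step t (S : {set T}) : (t != 0)%N -> (1 < #|S|)%N ->
  dist t.+1 S = fun o => (diam d S)^-1 * Rintegral mu `[0, diam d S]%classic
        (fun r =>
           \sum_(a : out T k) \sum_(b : out T k)
             dist t (ball_part d S (pick S) r) a *
             dist t (S :\: ball_part d S (pick S) r) b *
             (o == combine d t.+1 S a b)%:R).
Proof. by move=> /negbTE t0 S1 /=; rewrite t0 /= leqNgt S1. Qed.

Lemma dist_ge0 t (S : {set T}) o : 0 <= dist t S o.
Proof.
elim: t S o => [|t IH] S o; first by rewrite dist0.
have [h|h] := boolP ((t == 0)%N || (#|S| <= 1)%N); first by rewrite dist_small.
move: h; rewrite negb_or -ltnNge => /andP[t0 S1]; rewrite dist_step //.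
apply: mulr_ge0; first by rewrite invr_ge0 diam_ge0.
apply: Rintegral_ge0 => r _; apply: sumr_ge0 => a _; apply: sumr_ge0 => b _.
by rewrite !mulr_ge0.
Qed.

Lemma sum_pt (P : pred (out T k)) (c : out T k) :
  \sum_(o | P o) (o == c)%:R = (P c)%:R :> R.
Proof.
rewrite big_mkcond (bigD1 c) //= eqxx big1 ?addr0; first by case: (P c).
by move=> o /negbTE ->; case: (P o).
Qed.

Lemma prob_step t (S : {set T}) (P : pred (out T k)) : (t != 0)%N -> (1 < #|S|)%N ->
  recMSD_prob d pick t.+1 S P = (diam d S)^-1 * Rintegral mu `[0, diam d S]%classic
        (fun r =>
           \sum_(a : out T k) \sum_(b : out T k)
             dist t (ball_part d S (pick S) r) a *
             dist t (S :\: ball_part d S (pick S) r) b *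
             (P (combine d t.+1 S a b))%:R).
Proof.
move=> t0 S1; rewrite /recMSD_prob dist_step // -big_distrr /=; congr (_ * _).
rewrite (@Rint_sum R T d S (pick S) (diam d S) _ _ _ (fun o U =>
   \sum_(a : out T k) \sum_(b : out T k) dist t U a * dist t (S :\: U) b *
      (o == combine d t.+1 S a b)%:R)).
apply: eq_Rintegral => r _.
rewrite exchange_big /=; apply: eq_bigr => a _.
rewrite exchange_big /=; apply: eq_bigr => b _.
by rewrite -big_distrr /= sum_pt.
Qed.

Hypothesis hm : is_metric d.
Hypothesis hsel : diam_selector d pick.

Lemma diam_pos (S : {set T}) : (1 < #|S|)%N -> 0 < diam d S.
Proof.
case/card_gt1P => p [q [pS qS pq]].
case: hm => d0 dE _ _.
apply: (lt_le_trans _ (diam_ub d pS qS)).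
rewrite lt_neqAle d0 andbT; apply/eqP => /esym /dE /eqP.
by rewrite (negbTE pq).
Qed.

Lemma mass1 t (S : {set T}) : \sum_o dist t S o = 1.
Proof.
elim: t S => [|t IH] S.
  by rewrite dist0; have := sum_pt xpredT (init_out k S).
have [h|h] := boolP ((t == 0)%N || (#|S| <= 1)%N).
  by rewrite dist_small //; have := sum_pt xpredT (init_out k S).
move: h; rewrite negb_or -ltnNge => /andP[t0 S1].
have := prob_step xpredT t0 S1; rewrite /recMSD_prob /= => ->.
under eq_Rintegral do (under eq_bigr do (under eq_bigr do rewrite mulr1; rewrite -big_distrr /= IH mulr1); rewrite IH).
rewrite Rintegral_cst; last exact: measurable_itv.
by rewrite mul1r mu_itv ?diam_ge0 // mulVf // gt_eqF // diam_pos.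
Qed.

End Rec.


Section Main.
Variables (R : realType) (T : finType) (d : T -> T -> R) (k : nat) (pick : {set T} -> T).
Notation mu := (@lebesgue_measure R).
Notation dist := (@recMSD_dist R T d k pick).
Hypothesis hm : is_metric d.
Hypothesis hsel : diam_selector d pick.
Variable eps : R.
Hypothesis he : 0 <= eps < 1.

Lemma clust1 (S : {set T}) C : (0 < #|S|)%N -> is_clustering 1 S C -> cost d C = diam d S.
Proof.
move=> S0 [cC U].
have [C0|] := eqVneq #|C| 0%N.
  move: U; rewrite (cards0_eq C0) big_set0 => U.
  by move: S0; rewrite -U cards0.
move=> C0; have /cards1P [A CA] : #|C| == 1%N by rewrite eqn_leq cC lt0n C0.
by move: U; rewrite CA big_set1 => ->; rewrite cost_set1.
Qed.

Lemma diam_small (S : {set T}) : (#|S| <= 1)%N -> diam d S = 0.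
Proof.
move=> /card_le1P S1; apply/le_anti; rewrite diam_ge0 andbT.
apply: diam_le => // p q pS qS.
have := S1 p pS q; rewrite qS => /esym /eqP ->.
by case: hm => _ dE _ _; rewrite (proj2 (dE p p)).
Qed.

Lemma le_div1 c : 0 <= c -> c <= c / (1 - eps).
Proof.
move=> c0; case/andP: he => e0 e1.
have h : 0 < 1 - eps by rewrite subr_gt0.
rewrite ler_pdivlMr // -subr_ge0 mulrBr mulr1 opprB addrC subrK.
by rewrite mulr_ge0.
Qed.


Definition mC (S C : {set T}) := \big[Num.min/diam d S]_(p in C) d (pick S) p.
Definition MC (S C : {set T}) := \big[Num.max/0]_(q in C) d (pick S) q.

Lemma nocut t (S : {set T}) r (Copt : {set {set T}}) (rho : R) :
  (t.+1 <= k)%N -> (1 < #|S|)%N -> (2 <= r <= t.+1)%N -> is_clustering r S Copt ->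
  (forall (S' : {set T}) r' (C' : {set {set T}}), (0 < #|S'|)%N -> (1 <= r' <= t)%N -> is_clustering r' S' C' ->
     eps ^+ (r' - 1) <= recMSD_prob d pick t S'
       (fun o : out T k => cost d (o (inord r')) <= cost d C' / (1 - eps))) ->
  0 <= rho <= diam d S ->
  (forall C, C \in Copt -> ~ (mC S C <= rho <= MC S C)) ->
  eps ^+ (r - 2) <=
    \sum_(a : out T k) \sum_(b : out T k)
             dist t (ball_part d S (pick S) rho) a *
             dist t (S :\: ball_part d S (pick S) rho) b *
             ((cost d (combine d t.+1 S a b (inord r)) <= cost d Copt / (1 - eps))%R)%:R.
Proof.
move=> tk Sgt1 r2 [cC U] IHt /andP[r0 rD] ncut.
set x := pick S; set D := diam d S.
have S0 : (0 < #|S|)%N by apply: ltnW.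
have [xS [y yS dxy]] := hsel S0.
case: hm => d0 dE dsym dtri.
have CS : forall C, C \in Copt -> C \subset S.
  by move=> C CC; rewrite -U; apply: finset.bigcup_sup.
have inS : forall z, z \in S -> exists2 C, C \in Copt & z \in C.
  by move=> z; rewrite -U => /finset.bigcupP [C CC zC]; exists C.
have cut : forall C p q, C \in Copt -> p \in C -> q \in C -> d x p <= rho -> rho < d x q -> False.
  move=> C p q CC pC qC hp hq; apply: (ncut C CC); apply/andP; split.
    exact: le_trans (bigmin_le_cond _ _ pC) hp.
  exact: le_trans (ltW hq) (le_bigmax_cond _ _ qC).
have rhoD : rho < D.
  rewrite lt_neqAle rD andbT; apply/eqP => rhoE.
  have [C CC yC] := inS y yS.
  apply: (ncut C CC); apply/andP; split.
    by apply: le_trans (bigmin_le_cond _ _ yC) _; rewrite /x dxy rhoE.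
  by apply: le_trans (le_bigmax_cond _ _ yC); rewrite /x dxy rhoE.
set S1 := ball_part d S x rho; set S2 := S :\: S1.
have xS1 : x \in S1 by rewrite inE xS (proj2 (dE x x)).
have yS2 : y \in S2 by rewrite !inE yS andbT /x dxy -ltNge.
set P1 := [set C : {set T} | C \subset S1].
set C1 := Copt :&: P1; set C2 := Copt :\: P1.
have C2sub : forall C, C \in C2 -> C \subset S2.
  move=> C; rewrite !inE => /andP[nC1 CC].
  have [q qC qS1] := subsetPn nC1.
  apply/fintype.subsetP => z zC.
  have zS : z \in S := fintype.subsetP (CS C CC) z zC.
  rewrite inE zS andbT; apply/negP; rewrite inE zS /= => hz.
  have qS : q \in S := fintype.subsetP (CS C CC) q qC.
  move: qS1; rewrite !inE qS /= -ltNge => hq.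
  exact: cut C z q CC zC qC hz hq.
have U1 : \bigcup_(C in C1) C = S1.
  apply/setP => z; apply/finset.bigcupP/idP => [[C CC1 zC]|zS1].
    move: CC1; rewrite inE => /andP[_]; rewrite inE => /fintype.subsetP H.
    exact: H z zC.
  have zS : z \in S by move: zS1; rewrite inE => /andP[].
  have [C CC zC] := inS z zS; exists C => //.
  rewrite inE CC /= inE; apply/negPn/negP => nC.
  have CC2 : C \in C2 by rewrite inE CC andbT inE.
  by have := fintype.subsetP (C2sub C CC2) z zC; rewrite inE zS1.
have U2 : \bigcup_(C in C2) C = S2.
  apply/setP => z; apply/finset.bigcupP/idP => [[C CC2 zC]|zS2].
    exact: (fintype.subsetP (C2sub C CC2)).
  have zS : z \in S by move: zS2; rewrite inE => /andP[].
  have [C CC zC] := inS z zS; exists C => //.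
  rewrite inE CC andbT inE; apply/negP => /fintype.subsetP /(_ z zC) zS1.
  by move: zS2; rewrite inE zS1.
have card12 : (#|C1| + #|C2| = #|Copt|)%N by apply: cardsID.
have C1pos : (0 < #|C1|)%N.
  by apply/card_gt0P; move: xS1; rewrite -U1 => /finset.bigcupP [C CC _]; exists C.
have C2pos : (0 < #|C2|)%N.
  by apply/card_gt0P; move: yS2; rewrite -U2 => /finset.bigcupP [C CC _]; exists C.
have costE : cost d Copt = cost d C1 + cost d C2 by apply: cost_split.
set j := #|C2|; set i := (r - j)%N.
have hi : (1 <= i <= t)%N by rewrite /i; lia.
have hj : (1 <= j <= t)%N by rewrite /j; lia.
have hij : (i + j = r)%N by rewrite /i; lia.
have S1pos : (0 < #|S1|)%N by apply/card_gt0P; exists x.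
have S2pos : (0 < #|S2|)%N by apply/card_gt0P; exists y.
have cl1 : is_clustering i S1 C1 by split => //; rewrite /i; lia.
have cl2 : is_clustering j S2 C2 by split.
have hA := IHt S1 i C1 S1pos hi cl1.
have hB := IHt S2 j C2 S2pos hj cl2.
have good : forall a b : out T k,
    cost d (a (inord i)) <= cost d C1 / (1 - eps) ->
    cost d (b (inord j)) <= cost d C2 / (1 - eps) ->
    cost d (combine d t.+1 S a b (inord r)) <= cost d Copt / (1 - eps).
  move=> a b ha hb; rewrite -hij costE mulrDl.
  have h1 : (1 <= i <= t.+1.-1)%N by rewrite succnK.
  have h2 : (1 <= j <= t.+1.-1)%N by rewrite succnK.
  have h3 : (i + j <= t.+1)%N by rewrite hij; case/andP: r2.
  have h4 : (i + j <= k)%N by rewrite hij; case/andP: r2 => _ /leq_trans; apply.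
  apply: le_trans (@combine_le_cand _ _ d k t.+1 S a b i j h1 h2 h3 h4) _.
  by apply: le_trans (cost_setU _ _ _) _; apply: lerD.
have -> : (r - 2 = (i - 1) + (j - 1))%N by lia.
rewrite exprD.
apply: le_trans (ler_pM _ _ hA hB) _; rewrite ?exprn_ge0 //.
1,2: by case/andP: he.
rewrite /recMSD_prob big_distrl /= big_mkcond /=.
apply: ler_sum => a _; case: ifP => ha; last first.
  by apply: sumr_ge0 => b _; rewrite !mulr_ge0 // dist_ge0.
rewrite big_distrr /= big_mkcond /=.
apply: ler_sum => b _; case: ifP => hb; last by rewrite !mulr_ge0 // dist_ge0.
by rewrite good // mulr1.
Qed.

End Main.


Lemma ind_itv (R : realType) (m M r : R) :
  (\1_(`[m, M]%classic) r : R) = ((m <= r <= M)%R)%:R.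
Proof.
have E : (r \in `[m, M]%classic) = (m <= r <= M).
  by apply/idP/idP => [/set_mem|h]; [rewrite /= in_itv | apply: mem_set; rewrite /= in_itv].
by rewrite indicE E.
Qed.

Section Main2.
Variables (R : realType) (T : finType) (d : T -> T -> R) (k : nat) (pick : {set T} -> T).
Notation mu := (@lebesgue_measure R).
Notation dist := (@recMSD_dist R T d k pick).
Hypothesis hm : is_metric d.
Hypothesis hsel : diam_selector d pick.

Lemma MC_mC (S C : {set T}) : (0 < #|S|)%N -> C \subset S ->
  MC d pick S C - mC d pick S C <= diam d C.
Proof.
move=> S0 CS; have [xS _] := hsel S0; case: hm => d0 dE dsym dtri.
set x := pick S.
have mC0 : 0 <= mC d pick S C by apply: le_bigmin => //; exact: diam_ge0.
rewrite lerBlDr; apply: bigmax_le; first by rewrite addr_ge0 ?diam_ge0.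
move=> q qC; rewrite addrC -lerBlDr; apply: le_bigmin.
  rewrite lerBlDr; apply: le_trans (diam_ub d xS (fintype.subsetP CS q qC)) _.
  by rewrite lerDl diam_ge0.
move=> p pC; rewrite lerBlDr; apply: le_trans (dtri x p q) _.
by rewrite lerD2l diam_ub.
Qed.


Lemma int_lb (S : {set T}) (Copt : {set {set T}}) (e : R) : (0 < #|S|)%N ->
  (forall C, C \in Copt -> C \subset S) -> 0 <= e ->
  e * (diam d S - cost d Copt) <= Rintegral mu `[0, diam d S]%classic
     (fun r => e * (1 - \sum_(C <- enum Copt)
          (\1_(`[mC d pick S C, MC d pick S C]%classic) r : R))).
Proof.
move=> S0 CS e0.
have Fi : forall C, mu.-integrable `[0, diam d S]%classic
    (EFin \o (\1_(`[mC d pick S C, MC d pick S C]%classic) : R -> R)).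
  by move=> C; apply: int_indic; exact: measurable_itv.
have [Si SE] := Rint_sum_gen (enum Copt) Fi.
have onei : mu.-integrable `[0, diam d S]%classic (EFin \o (fun _ : R => 1 : R)).
  apply: (@int_bdd _ _ _ 1); first exact: measurable_cst.
  by move=> _; rewrite normr1.
rewrite RintegralZl; first last.
- pose f1 : R -> R := fun _ => 1.
  pose f2 : R -> R := fun r => \sum_(C <- enum Copt)
          (\1_(`[mC d pick S C, MC d pick S C]%classic) r : R).
  rewrite (_ : (EFin \o _) = ((EFin \o f1) \- (EFin \o f2))%E).
    by apply: integrableB => //; exact: measurable_itv.
  by apply/funext => r /=; rewrite EFinB.
- exact: measurable_itv.
rewrite RintegralB //; try exact: measurable_itv.
rewrite Rintegral_cst; try exact: measurable_itv.
rewrite mul1r mu_itv ?diam_ge0 // -SE.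
apply: ler_wpM2l => //; rewrite lerD2l lerN2.
rewrite /cost -big_enum /= big_seq [X in _ <= X]big_seq.
apply: ler_sum => C; rewrite mem_enum => CC.
apply: Rint_indic_le; last exact: diam_ge0.
exact: MC_mC S0 (CS C CC).
Qed.


Lemma int_g (S : {set T}) (Copt : {set {set T}}) (e : R) :
  mu.-integrable `[0, diam d S]%classic (EFin \o
     (fun r => e * (1 - \sum_(C <- enum Copt)
          (\1_(`[mC d pick S C, MC d pick S C]%classic) r : R)))).
Proof.
apply: (@int_bdd _ _ _ (`|e| * (1 + \sum_(C <- enum Copt) 1))).
  apply: measurable_realfun.measurable_funM; first exact: measurable_cst.
  apply: measurable_realfun.measurable_funB; first exact: measurable_cst.
  apply: measurable_sum => C; apply: measurable_realfun.measurable_indic.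
  exact: measurable_itv.
move=> r; rewrite normrM ler_wpM2l //.
apply: le_trans (ler_normB _ _) _; rewrite normr1 lerD2l.
apply: le_trans (ler_norm_sum _ _ _) _; apply: ler_sum => C _.
by rewrite ind_itv; case: (_ <= _ <= _); rewrite ?normr1 ?normr0.
Qed.

End Main2.


Section Main3.
Variables (R : realType) (T : finType) (d : T -> T -> R) (k : nat) (pick : {set T} -> T).
Notation mu := (@lebesgue_measure R).
Notation dist := (@recMSD_dist R T d k pick).
Hypothesis hm : is_metric d.
Hypothesis hsel : diam_selector d pick.
Variable eps : R.
Hypothesis he : 0 <= eps < 1.

Lemma main t : forall (S : {set T}) r (Copt : {set {set T}}),
  (0 < #|S|)%N -> (1 <= t <= k)%N -> (1 <= r <= t)%N -> is_clustering r S Copt ->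
  eps ^+ (r - 1) <= recMSD_prob d pick t S
    (fun o : out T k => cost d (o (inord r)) <= cost d Copt / (1 - eps)).
Proof.
elim: t => [|t IH] S r Copt S0 tk rt cl; first by exfalso; lia.
have [e0 e1'] := andP he; have e1 : eps <= 1 by apply: ltW.
have eps1 : eps ^+ (r - 1) <= 1 by apply: exprn_ile1.
have ome : 0 < 1 - eps by rewrite subr_gt0.
have c0 : 0 <= cost d Copt / (1 - eps) by rewrite divr_ge0 ?cost_ge0 // ltW.
have [h|h] := boolP ((t == 0)%N || (#|S| <= 1)%N).
  rewrite /recMSD_prob dist_small // sum_pt /init_out ffunE cost_set1.
  suff -> : diam d S <= cost d Copt / (1 - eps) by [].
  case/orP: h => [/eqP t0|S1].
    have r1 : r = 1%N by lia.
    rewrite (clust1 d S0 (_ : is_clustering 1 S Copt)); last by rewrite -r1.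
    exact: (le_div1 he (diam_ge0 d S)).
  by rewrite diam_small.
move: h; rewrite negb_or -ltnNge => /andP[t0 Sgt1].
rewrite prob_step //.
have Dpos : 0 < diam d S := diam_pos hm Sgt1.
have tk' : (1 <= t <= k)%N by lia.
have [hD|hD] := leP (diam d S) (cost d Copt / (1 - eps)).
  rewrite (@eq_Rintegral _ _ _ mu _ (fun _ => 1)).
    rewrite Rintegral_cst; last exact: measurable_itv.
    by rewrite mul1r mu_itv ?diam_ge0 // mulVf // gt_eqF.
  move=> rho _.
  under eq_bigr => a _ do (under eq_bigr => b _ do
    rewrite (le_trans (combine_le_init _ _ _ _ _ _) hD) mulr1; rewrite -big_distrr /= mass1 // mulr1).
  by rewrite mass1.
have r2 : (2 <= r)%N.
  case: (ltnP 1 r) => // r1; have r1' : r = 1%N by lia.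
  move: hD; rewrite (clust1 d S0 (_ : is_clustering 1 S Copt)); last by rewrite -r1'.
  by rewrite ltNge (le_div1 he (diam_ge0 d S)).
have CS : forall C, C \in Copt -> C \subset S.
  by case: cl => _ U C CC; rewrite -U; apply: finset.bigcup_sup.
have IHt := fun S' r' C' S'0 rt' cl' => IH S' r' C' S'0 tk' rt' cl'.
have lb := int_lb hm hsel S0 CS (exprn_ge0 (r - 2) e0).
set h := (fun r0 => \sum_a \sum_b _).
have gh : Rintegral mu `[0, diam d S]%classic (fun r0 => eps ^+ (r - 2) * (1 - \sum_(C <- enum Copt)
          (\1_(`[mC d pick S C, MC d pick S C]%classic) r0 : R))) <=
          Rintegral mu `[0, diam d S]%classic h.
  apply: le_Rintegral.
  - exact: measurable_itv.
  - exact: int_g.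
  - exact: (int_ballf d S (pick S) (diam d S) (fun U =>
      \sum_(a : out T k) \sum_(b : out T k) dist t U a * dist t (S :\: U) b *
       ((cost d (combine d t.+1 S a b (inord r)) <= cost d Copt / (1 - eps))%R)%:R)).
  move=> rho; rewrite /= in_itv /= => rhoD.
  have hge0 : 0 <= h rho.
    by apply: sumr_ge0 => a _; apply: sumr_ge0 => b _; rewrite !mulr_ge0 // dist_ge0.
  case: (pselect (exists2 C, C \in Copt & mC d pick S C <= rho <= MC d pick S C)) => [[C CC hC]|nC].
    apply: le_trans hge0; apply: mulr_ge0_le0; first exact: exprn_ge0.
    rewrite subr_le0 big_enum /= (bigD1 C) //= ind_itv hC /= lerDl.
    by apply: sumr_ge0 => C' _; rewrite ind_itv.
  have -> : \sum_(C <- enum Copt)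
          (\1_(`[mC d pick S C, MC d pick S C]%classic) rho : R) = 0.
    apply: big1_seq => C /andP[_]; rewrite mem_enum => CC.
    rewrite ind_itv; case: (boolP (mC d pick S C <= rho <= MC d pick S C)) => hC //.
    by exfalso; apply: nC; exists C.
  rewrite subr0 mulr1.
  apply: (nocut hm hsel he) => //; first by lia.
  by move=> C CC hC; apply: nC; exists C.
apply: le_trans (ler_wpM2l _ (le_trans lb gh)); last by rewrite invr_ge0 ltW.
rewrite (_ : (r - 1 = (r - 2).+1)%N); last by lia.
rewrite exprSr mulrCA; apply: ler_wpM2l; first exact: exprn_ge0.
rewrite mulrC ler_pdivlMr //.
have : cost d Copt < diam d S * (1 - eps) by rewrite -ltr_pdivrMr.
move: (cost d Copt) (diam d S) => c D' hc; nra.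
Qed.

End Main3.

Unset Implicit Arguments.
Theorem lemma2 (R : realType) (T : finType) (d : T -> T -> R)
  (k : nat) (pick : {set T} -> T) (S : {set T}) (t r : nat)
  (Copt : {set {set T}}) (eps : R) :
  is_metric d ->
  diam_selector d pick ->
  (0 < k)%N ->
  (0 < #|S|)%N ->
  (1 <= t <= k)%N ->
  (1 <= r <= t)%N ->
  is_clustering r S Copt ->
  (forall C, is_clustering r S C -> cost d Copt <= cost d C) ->
  0 <= eps < 1 ->
  recMSD_prob d pick t S
    (fun o : out T k => cost d (o (inord r)) <= cost d Copt / (1 - eps))
  >= eps ^+ (r - 1).
Proof.
move=> hm hsel _ S0 tk rt cl _ he.
exact: main.
Qed.
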